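(* Let $g,h$ be relatively prime divisors of $N$. If $p\nmid g$, then $\beta_{g,h}=0$ unless $h=1$, or $f=M$ and $h=p$. If $p\ge5$ and $p\mid g$, then $\beta_{g,h}=0$.
   Context: $p$ is an odd prime, $M$ a positive integer with $p\nmid M\varphi(M)$, and $N=Mp$. $\Delta=(\mathbb{Z}/N\mathbb{Z})^\times/\langle-1\rangle$; $H$ is a space of level $N$ modular symbols: a $\mathbb{Z}_p[\Delta]$-module spanned by symbols $[u:v]$ ($u,v\in\mathbb{Z}/N\mathbb{Z}$ generating the unit ideal) satisfying $[u:v]=[-u:-v]=-[-v:u]$, $[u:v]=[u:u+v]+[u+v:v]$, $\langle a\rangle[u:v]=[au:av]$. $\theta:\Delta\to\mathbb{C}_p^\times$ is a character, $\omega$ the Teichmüller character of $(\mathbb{Z}/p\mathbb{Z})^\times$ viewed on $(\mathbb{Z}/N\mathbb{Z})^\times$, and $f$ the conductor of $\theta\omega^{-2}$; it is assumed that $M\mid f$, and that $f=Mp$ if $p=3$. $\mathcal{O}=\mathbb{Z}_p[\mu_{\varphi(N)}]$, $e_\theta=\frac1{\varphi(N)}\sum_a\theta^{-1}(a)\langle a\rangle$, $H^\theta=e_\theta(H\otimes\mathcal{O})$, and for characters $\chi,\psi$ of $(\mathbb{Z}/N\mathbb{Z})^\times$ with $\chi\psi=\theta$ and relatively prime divisors $g,h$ of $N$, $\alpha^{g,h}_{\chi,\psi}=\frac1{\varphi(N)^2}\sum_{a,b}\chi^{-1}(a)\psi^{-1}(b)[ga:hb]$. Set $\beta_{g,h}=\alpha^{g,h}_{\omega^2,\theta\omega^{-2}}$.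 *)

(* Defs.v *)
From HB Require Import structures.
From mathcomp Require Import all_boot all_order all_algebra all_fingroup.
Set Implicit Arguments. Unset Strict Implicit. Unset Printing Implicit Defensive.
Import GRing.Theory.
Local Open Scope ring_scope.

Definition unat (N : nat) (a : {unit 'Z_N}) : nat := nat_of_ord (FinRing.uval a).

Definition is_dchar (N : nat) (O : comUnitRingType) (chi : {unit 'Z_N} -> O) :=
  chi 1%g = 1 /\ forall a b : {unit 'Z_N}, chi (a * b)%g = chi a * chi b.

(* chi factors through Delta = (Z/NZ)^x / <-1>. *)
Definition even_char (N : nat) (O : comUnitRingType) (chi : {unit 'Z_N} -> O) :=
  forall a b : {unit 'Z_N}, FinRing.uval b = - FinRing.uval a -> chi b = chi a.

Definition triv_mod (N : nat) (O : comUnitRingType) (chi : {unit 'Z_N} -> O) (d : nat) :=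
  [forall a : {unit 'Z_N}, (unat a == 1 %[mod d])%N ==> (chi a == 1)].

(* Conductor: the smallest divisor d of N such that chi is trivial on
   units congruent to 1 mod d ("divisors N" is sorted increasingly). *)
Definition conductor (N : nat) (O : comUnitRingType) (chi : {unit 'Z_N} -> O) : nat :=
  head N [seq d <- divisors N | triv_mod chi d].

(* omega is (a) Teichmueller character of (Z/pZ)^x viewed on (Z/NZ)^x,
   relative to the reduction map red : O -> k (k of characteristic p):
   a character factoring through reduction mod p, with values (p-1)-th
   roots of unity and omega(a) = a modulo the maximal ideal. *)
Definition is_teichmuller (N p : nat) (O : comUnitRingType) (k : fieldType)
    (red : O -> k) (om : {unit 'Z_N} -> O) :=
  [/\ is_dchar om,
      forall a b : {unit 'Z_N}, (unat a = unat b %[mod p])%N -> om a = om b,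
      forall a, om a ^+ p.-1 = 1 &
      forall a, red (om a) = (unat a)%:R].

Definition unimod (N : nat) (u v : 'Z_N) : bool :=
  [exists x : 'Z_N, exists y : 'Z_N, x * u + y * v == 1].

(* V (playing the role of H (x) O) is an O-module spanned by symbols [u:v]
   (u, v unimodular), satisfying the modular symbol relations, with the
   diamond action <a>[u:v] = [au:av]. *)
Definition modsym_space (N : nat) (O : comUnitRingType) (V : lmodType O)
    (sym : 'Z_N -> 'Z_N -> V) (act : {unit 'Z_N} -> V -> V) :=
  [/\ forall u v, unimod u v ->
        [/\ sym u v = sym (- u) (- v), sym u v = - sym (- v) u
          & sym u v = sym u (u + v) + sym (u + v) v],
      forall x : V, exists c : 'Z_N -> 'Z_N -> O,
        x = \sum_(u : 'Z_N) \sum_(v : 'Z_N | unimod u v) c u v *: sym u v,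
      forall a (c : O) (x y : V), act a (c *: x + y) = c *: act a x + act a y,
      (forall x, act 1%g x = x /\ forall a b, act (a * b)%g x = act a (act b x)) &
      forall a u v, unimod u v ->
        act a (sym u v) = sym (FinRing.uval a * u) (FinRing.uval a * v)].

Definition alpha (N : nat) (O : comUnitRingType) (V : lmodType O)
    (sym : 'Z_N -> 'Z_N -> V) (chi psi : {unit 'Z_N} -> O) (g h : nat) : V :=
  (((totient N ^ 2)%N)%:R)^-1 *:
    \sum_(a : {unit 'Z_N}) \sum_(b : {unit 'Z_N})
      ((chi a)^-1 * (psi b)^-1) *: sym (g%:R * FinRing.uval a) (h%:R * FinRing.uval b).

Definition thom2 (N : nat) (O : comUnitRingType) (th om : {unit 'Z_N} -> O) :=
  fun b : {unit 'Z_N} => th b * (om b ^+ 2)^-1.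

Definition beta (N : nat) (O : comUnitRingType) (V : lmodType O)
    (sym : 'Z_N -> 'Z_N -> V) (th om : {unit 'Z_N} -> O) (g h : nat) : V :=
  alpha sym (fun a => om a ^+ 2) (thom2 th om) g h.

(* Main.v *)
Require Import Defs.
From HB Require Import structures.
From mathcomp Require Import all_boot all_order all_algebra all_fingroup.
From mathcomp Require Import cyclic.
Import GRing.Theory.
Local Open Scope ring_scope.

Lemma dchar_X (N : nat) (O : comUnitRingType) (chi : {unit 'Z_N} -> O) n a :
  is_dchar chi -> chi (a ^+ n)%g = chi a ^+ n.
Proof.
case=> h1 hM; elim: n => [|n IH]; first by rewrite expg0 expr0.
by rewrite expgS hM IH exprS.
Qed.

Lemma dchar_unit (N : nat) (O : comUnitRingType) (chi : {unit 'Z_N} -> O) a :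
  is_dchar chi -> chi a \is a GRing.unit.
Proof.
move=> hc; have e : chi a ^+ #|[set: {unit 'Z_N}]| = 1.
  by rewrite -dchar_X // expg_cardG ?inE //; case: hc.
have hpos : (0 < #|[set: {unit 'Z_N}]|)%N.
  by apply/card_gt0P; exists 1%g; rewrite inE.
move: e hpos; case: #|_| => // n e _.
by apply/unitrPr; exists (chi a ^+ n); rewrite -exprS e.
Qed.

Lemma sum_vanish (N : nat) (O : idomainType) (V : lmodType O)
  (F : {unit 'Z_N} -> V) (psi : {unit 'Z_N} -> O) (c0 : {unit 'Z_N}) :
  is_dchar psi -> psi c0 != 1 -> (forall b, F (b * c0)%g = F b) ->
  ((#|[set: {unit 'Z_N}]|)%:R : O) \is a GRing.unit ->
  \sum_b (psi b)^-1 *: F b = 0.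
Proof.
move=> hc hne hF hn.
set S := \sum_b _.
set z := (psi c0)^-1.
have hS : S = z *: S.
  rewrite {1}/S (reindex_inj (@mulIg _ c0)) /= scaler_sumr.
  apply: eq_bigr => b _; rewrite hF scalerA; congr (_ *: _).
  case: (hc) => _ hM; rewrite hM invrM //; exact: dchar_unit.
have hz : z != 1.
  by apply: contra hne => /eqP e; rewrite -[psi c0]invrK -/z e invr1.
have hzn : z ^+ #|[set: {unit 'Z_N}]| = 1.
  by case: (hc) => h1 _; rewrite /z exprVn -dchar_X // expg_cardG ?inE // h1 invr1.
move: hn hzn; set n := #|_| => hn hzn.
have hsum : \sum_(i < n) z ^+ i = 0.
  have : (z - 1) * \sum_(i < n) z ^+ i = 0 by rewrite -subrX1 hzn subrr.
  by move/eqP; rewrite mulf_eq0 subr_eq0 (negPf hz) /= => /eqP.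
have hzi : forall i, z ^+ i *: S = S.
  elim=> [|i IH]; first by rewrite expr0 scale1r.
  by rewrite exprSr -scalerA -hS IH.
have : n%:R *: S = 0.
  transitivity (\sum_(i < n) z ^+ i *: S); last by rewrite -scaler_suml hsum scale0r.
  under eq_bigr do rewrite hzi.
  by rewrite sumr_const card_ord scaler_nat.
move/(congr1 (fun x => (n%:R)^-1 *: x)); rewrite scalerA mulVr // scale1r scaler0 //.
Qed.
Section ZN.
Variable N : nat.
Hypothesis hN1 : (1 < N)%N.

Lemma uvalE (u : {unit 'Z_N}) : FinRing.uval u = (unat u)%:R.
Proof. by rewrite /unat natr_Zp. Qed.

Lemma unat_lt (u : {unit 'Z_N}) : (unat u < N)%N.
Proof. have := ltn_ord (FinRing.uval u); rewrite -/(unat u) => h; exact: (leq_trans h (eq_leq (Zp_cast hN1))). Qed.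

Lemma unat_coprime (u : {unit 'Z_N}) : coprime N (unat u).
Proof. by rewrite -unitZpE // -uvalE; case: u. Qed.

Lemma natZ_eq m n : (m = n %[mod N])%N -> (m%:R : 'Z_N) = n%:R.
Proof. by move=> e; apply: val_inj; rewrite /= !val_Zp_nat. Qed.

Lemma mkunit x : coprime N x -> exists u : {unit 'Z_N}, unat u = (x %% N)%N.
Proof.
rewrite -unitZpE // => ux; exists (FinRing.Unit ux).
by rewrite /unat /= val_Zp_nat.
Qed.

Lemma unat1 (u : {unit 'Z_N}) : unat u = 1%N -> u = 1%g.
Proof.
move=> e; apply: val_inj; rewrite /= uvalE e //.
Qed.

Lemma unat_pos (u : {unit 'Z_N}) : (0 < unat u)%N.
Proof.
rewrite lt0n; apply/negP => /eqP e; have := unat_coprime u.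
by rewrite e /coprime gcdn0 => /eqP e'; move: hN1; rewrite e'.
Qed.

End ZN.

Lemma cond_le (N : nat) (O : comUnitRingType) (chi : {unit 'Z_N} -> O) d :
  (0 < N)%N -> (d %| N)%N -> triv_mod chi d -> (conductor chi <= d)%N.
Proof.
move=> hN hd ht; rewrite /conductor.
have : d \in [seq d <- divisors N | triv_mod chi d].
  by rewrite mem_filter ht -dvdn_divisors.
have : sorted leq [seq d <- divisors N | triv_mod chi d].
  by apply: sorted_filter; [exact: leq_trans | exact: sorted_divisors].
case: [seq _ <- _ | _] => [|x s] //= hs.
rewrite inE => /orP [/eqP -> //|hds].
by have := order_path_min leq_trans hs => /allP /(_ _ hds).
Qed.

Lemma cond_prop (N : nat) (O : comUnitRingType) (chi : {unit 'Z_N} -> O) :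
  (1 < N)%N -> is_dchar chi ->
  (conductor chi %| N)%N /\ triv_mod chi (conductor chi).
Proof.
move=> hN [h1 _]; rewrite /conductor.
have : all (fun d => (d %| N)%N && triv_mod chi d) [seq d <- divisors N | triv_mod chi d].
  apply/allP => d; rewrite mem_filter => /andP [-> hd].
  by rewrite dvdn_divisors ?hd //; exact: ltnW.
case: [seq _ <- _ | _] => [|x s] /=; last by case/andP=> /andP [-> ->].
move=> _; split => //; apply/forallP => a; apply/implyP => ha.
have e : unat a = 1%N.
  by move: ha; rewrite (modn_small (@unat_lt _ hN a)) (modn_small hN) => /eqP.
by rewrite (@unat1 _ _ e) h1.
Qed.

Lemma dsum_b (N : nat) (O : idomainType) (V : lmodType O) (sym : 'Z_N -> 'Z_N -> V)
  (chi psi : {unit 'Z_N} -> O) (g h : nat) (c0 : {unit 'Z_N}) :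
  is_dchar psi -> psi c0 != 1 -> h%:R * FinRing.uval c0 = h%:R ->
  ((#|[set: {unit 'Z_N}]|)%:R : O) \is a GRing.unit ->
  \sum_a \sum_b ((chi a)^-1 * (psi b)^-1) *:
      sym (g%:R * FinRing.uval a) (h%:R * FinRing.uval b) = 0.
Proof.
move=> hc hne hc0 hn; rewrite big1 // => a _.
under eq_bigr do rewrite -scalerA.
rewrite -scaler_sumr (@sum_vanish _ _ _ (fun b => sym (g%:R * FinRing.uval a) (h%:R * FinRing.uval b)) _ c0 hc hne) ?scaler0 //.
by move=> b /=; rewrite mulrCA hc0 (mulrC (FinRing.uval b)).
Qed.

Lemma dsum_a (N : nat) (O : idomainType) (V : lmodType O) (sym : 'Z_N -> 'Z_N -> V)
  (chi psi : {unit 'Z_N} -> O) (g h : nat) (c0 : {unit 'Z_N}) :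
  is_dchar chi -> chi c0 != 1 -> g%:R * FinRing.uval c0 = g%:R ->
  ((#|[set: {unit 'Z_N}]|)%:R : O) \is a GRing.unit ->
  \sum_a \sum_b ((chi a)^-1 * (psi b)^-1) *:
      sym (g%:R * FinRing.uval a) (h%:R * FinRing.uval b) = 0.
Proof.
move=> hc hne hc0 hn; rewrite exchange_big big1 // => b _.
under eq_bigr do rewrite mulrC -scalerA.
rewrite -scaler_sumr (@sum_vanish _ _ _ (fun a => sym (g%:R * FinRing.uval a) (h%:R * FinRing.uval b)) _ c0 hc hne) ?scaler0 //.
by move=> a /=; rewrite mulrCA hc0 (mulrC (FinRing.uval a)).
Qed.

Lemma eqmod_dvd d m y z : (d %| m)%N -> (y = z %[mod m])%N -> (y = z %[mod d])%N.
Proof. by move=> hd e; rewrite -(modn_dvdm y hd) -(modn_dvdm z hd) e. Qed.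

Theorem lemma2p13
  (p M N : nat) (hp : prime p) (hp2 : (2 < p)%N) (hM : (0 < M)%N)
  (hpM : ~~ (p %| M * totient M)%N) (hN : N = (M * p)%N)
  (O : idomainType) (k : fieldType) (red : {rmorphism O -> k})
  (hk : p \in [pchar k])
  (hphi : ((totient N)%:R : O) \is a GRing.unit)
  (V : lmodType O) (sym : 'Z_N -> 'Z_N -> V) (act : {unit 'Z_N} -> V -> V)
  (hV : modsym_space sym act)
  (om : {unit 'Z_N} -> O) (hom : is_teichmuller p red om)
  (th : {unit 'Z_N} -> O) (hth : is_dchar th) (hthev : even_char th)
  (hMf : (M %| conductor (thom2 th om))%N)
  (hp3 : p = 3%N -> conductor (thom2 th om) = N)
  (g h : nat) (hg : (g %| N)%N) (hh : (h %| N)%N) (hgh : coprime g h) :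
  (~~ (p %| g)%N ->
     ~ (h = 1%N \/ (conductor (thom2 th om) = M /\ h = p)) ->
     beta sym th om g h = 0)
  /\ ((5 <= p)%N -> (p %| g)%N -> beta sym th om g h = 0).
Proof.
have hN1 : (1 < N)%N by rewrite hN; exact: leq_trans (ltnW hp2) (leq_pmull p hM).
have hN0 : (0 < N)%N by apply: ltnW.
case: hom => hom1 hommod homp homred.
have hchi : is_dchar (fun a => om a ^+ 2).
  by case: hom1 => h1 hm; split; [rewrite h1 expr1n | move=> a b; rewrite hm exprMn].
have hpsi : is_dchar (thom2 th om).
  case: hth => t1 tm; case: (hchi) => c1 cm; rewrite /thom2; split.
    by rewrite t1 c1 invr1 mulr1.
  move=> a b; rewrite tm cm invrM; try exact: (@dchar_unit _ _ _ _ hchi).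
  by rewrite [om b ^- 2 / _]mulrC mulrACA.
have hcard : ((#|[set: {unit 'Z_N}]|)%:R : O) \is a GRing.unit.
  by have := @card_units_Zp N hN0; rewrite /units_Zp => ->.
have hcopMp : coprime M p.
  rewrite coprime_sym prime_coprime //; apply: contra hpM => hd.
  exact: dvdn_mulr.
have hcr : forall y z, (y == z %[mod N])%N = (y == z %[mod M])%N && (y == z %[mod p])%N.
  by move=> y z; rewrite hN chinese_remainder.
rewrite /beta /alpha.
split.
- move=> hpg hnot.
  suff [c0 [hc0 hne]] : exists c0 : {unit 'Z_N}, h%:R * FinRing.uval c0 = h%:R /\ thom2 th om c0 != 1.
    by rewrite (@dsum_b _ _ _ _ _ _ _ _ c0 hpsi hne hc0 hcard) scaler0.
  have [c0 /andP [/eqP hc0 hne] | hall] :=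
    pickP (fun c : {unit 'Z_N} => (h%:R * FinRing.uval c == h%:R) && (thom2 th om c != 1)).
    by exists c0.
  exfalso.
  have H : forall c : {unit 'Z_N}, h%:R * FinRing.uval c = h%:R -> thom2 th om c = 1.
    by move=> c e; have := hall c; rewrite /= e eqxx /= => /negbFE /eqP.
  have hh0 : (0 < h)%N by apply: dvdn_gt0 hN0 hh.
  have hh1 : (1 < h)%N.
    by rewrite ltn_neqAle eq_sym hh0 andbT; apply/eqP => e; apply: hnot; left.
  have hfN_h : triv_mod (thom2 th om) (N %/ h).
    apply/forallP => a; apply/implyP => ha; apply/eqP; apply: H.
    rewrite uvalE -natrM; apply: (@natZ_eq N hN1); apply/eqP.
    have hap := @unat_pos N hN1 a.
    rewrite eqn_mod_dvd ?leq_pmulr // -{2}(muln1 h) -mulnBr mulnC.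
    apply: (@dvdn_trans (N %/ h * h)); first by rewrite divnK.
    by rewrite dvdn_mul // -eqn_mod_dvd.
  have hcle := @cond_le _ _ _ _ hN0 (@dvdn_div h N hh) hfN_h.
  have [hfN hft] := @cond_prop _ _ _ hN1 hpsi.
  set f := conductor _ in hMf hnot hcle hfN hft.
  have hq : (f %/ M %| p)%N.
    by rewrite -(dvdn_pmul2r hM) divnK // mulnC -hN.
  case/primeP: (hp) => _ hpd.
  have := hpd _ hq; case/orP => /eqP hq'; last first.
    have hfe : f = N by rewrite -(divnK hMf) hq' mulnC hN.
    by move: hcle; rewrite hfe leqNgt ltn_Pdiv.
  have hfe : f = M by rewrite -(divnK hMf) hq' mul1n.
  have hhp : h <> p by move=> e; apply: hnot; right.
  have hpN : (p %| N)%N by rewrite hN dvdn_mull.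
  have hMN : (M %| N)%N by rewrite hN dvdn_mulr.
  case hph: (p %| h)%N.
    apply: hhp; apply/eqP; rewrite eqn_leq (dvdn_leq hh0 hph) andbT.
    rewrite -(leq_pmul2l hM) -hN -(divnK hh) leq_mul2r.
    by rewrite -hfe hcle orbT.
  have hcoph : coprime h p by rewrite coprime_sym prime_coprime // hph.
  have hhM : (h %| M)%N by move: hh; rewrite hN Gauss_dvdl.
  set m := (M %/ h)%N.
  have hm : (m * h = M)%N by rewrite divnK.
  have hmM : (m %| M)%N by apply: dvdn_div.
  have hcopmp : coprime m p by apply: coprime_dvdl hmM hcopMp.
  suff hmt : triv_mod (thom2 th om) m.
    have := @cond_le _ _ _ _ hN0 (dvdn_trans hmM hMN) hmt.
    by rewrite -/f hfe leqNgt ltn_Pdiv.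
  apply/forallP => a; apply/implyP => ha.
  set x := unat a in ha.
  have hxN : coprime N x by apply: unat_coprime.
  have hxp : coprime p x by apply: coprime_dvdl hpN hxN.
  have hxM : coprime M x by apply: coprime_dvdl hMN hxN.
  set b := chinese M p 1 x.
  set c := chinese M p x 1.
  have bM : (b = 1 %[mod M])%N := chinese_modl hcopMp 1 x.
  have bp : (b = x %[mod p])%N := chinese_modr hcopMp 1 x.
  have cM : (c = x %[mod M])%N := chinese_modl hcopMp x 1.
  have cp : (c = 1 %[mod p])%N := chinese_modr hcopMp x 1.
  have hbN : coprime N b.
    rewrite hN coprimeMl -(coprime_modr M) bM coprime_modr coprimen1 /=.
    by rewrite -(coprime_modr p) bp coprime_modr.
  have hcN : coprime N c.
    rewrite hN coprimeMl -(coprime_modr M) cM coprime_modr hxM /=.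
    by rewrite -(coprime_modr p) cp coprime_modr coprimen1.
  have [ub hub] := @mkunit N hN1 b hbN.
  have [uc huc] := @mkunit N hN1 c hcN.
  have hab : a = (ub * uc)%g.
    apply: val_inj => /=; rewrite !uvalE hub huc -natrM; apply: (@natZ_eq N hN1).
    rewrite modnMm; apply/eqP; rewrite hcr; apply/andP; split.
      by rewrite -modnMm bM cM modnMm mul1n.
    by rewrite -modnMm bp cp modnMm muln1.
  have hNh : (N %/ h = m * p)%N by rewrite hN -hm mulnAC mulnK.
  case: (hpsi) => _ pM.
  rewrite hab pM.
  have -> : thom2 th om ub = 1.
    move: hft; rewrite hfe => /forallP /(_ ub) /implyP hi; apply/eqP; apply: hi; rewrite hub.
    by rewrite (modn_dvdm _ hMN) bM.
  have -> : thom2 th om uc = 1.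
    move: hfN_h => /forallP /(_ uc) /implyP hi; apply/eqP; apply: hi; rewrite huc hNh.
    rewrite (modn_dvdm _ (_ : m * p %| N)%N); last by rewrite -hNh dvdn_div.
    rewrite chinese_remainder // cp eqxx andbT.
    by rewrite -(modn_dvdm c hmM) cM modn_dvdm.
  by rewrite mulr1.
- move=> hp5 hpg.
  suff [c0 [hc0 hne]] : exists c0 : {unit 'Z_N}, g%:R * FinRing.uval c0 = g%:R /\ om c0 ^+ 2 != 1.
    by rewrite (@dsum_a _ _ _ _ _ _ _ _ c0 hchi hne hc0 hcard) scaler0.
  set c := chinese M p 1 2.
  have cM : (c = 1 %[mod M])%N := chinese_modl hcopMp 1 2.
  have cp : (c = 2 %[mod p])%N := chinese_modr hcopMp 1 2.
  have c2 : (2 %% p = 2)%N by rewrite modn_small.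
  have cpos : (0 < c)%N.
    by rewrite lt0n; apply/negP => /eqP c0; move: cp; rewrite c0 mod0n c2.
  have hcopN : coprime N c.
    rewrite hN coprimeMl -(coprime_modr M) cM coprime_modr coprimen1 /=.
    rewrite -coprime_modr cp c2 prime_coprime //; apply/negP.
    by move/(@dvdn_leq p 2 isT); rewrite leqNgt hp2.
  have [u hu] := @mkunit N hN1 c hcopN.
  have hpN : (p %| N)%N by rewrite hN dvdn_mull.
  exists u; split.
  - rewrite uvalE hu -natrM; apply: (@natZ_eq N hN1).
    rewrite modnMmr; apply/eqP; rewrite eqn_mod_dvd ?leq_pmulr //.
    rewrite -{2}(muln1 g) -mulnBr hN mulnC dvdn_mul //.
    by rewrite -eqn_mod_dvd //; apply/eqP.
  - apply/negP => /eqP e; have := congr1 red e.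
    rewrite rmorphXn homred rmorph1 hu -natrX => e2.
    have hup := @unat_pos N hN1 u; rewrite hu in hup.
    have h1 : (1 <= (c %% N) ^ 2)%N by rewrite expn_gt0 hup.
    have : (p %| (c %% N) ^ 2 - 1)%N by rewrite (dvdn_pcharf hk) natrB // e2 subrr.
    rewrite -eqn_mod_dvd // -modnXm (modn_dvdm _ hpN) cp c2.
    by rewrite !modn_small // ltnW.
Qed.
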